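(* Let $X\in\sigma\mathcal F$ and $F\in\mathsf{age}(X)$ with $\mathsf{rk}_X(F)=\alpha$ for some ordinal $\alpha<\infty$. If $\beta<\alpha$, then there is $E\in\mathsf{age}(X)$ with $\mathsf{rk}_X(E)=\beta$.
   Context: Let $\mathcal L$ be a countable relational language without constants and $\mathcal F$ a hereditary, isomorphism-closed class of finite $\mathcal L$-structures. $\sigma\mathcal F$ is the class of countable structures isomorphic to unions of chains in $\mathcal F$; $\mathsf{age}(X)$ is the set of finite (induced) substructures of $X$. For $A\le B$, $B$ is a prime extension of $A$ if $|B\setminus A|=1$; a realization of $B$ in $X$ (where $A\le X$) is $C\le X$ with $A\le C$ and an isomorphism $B\to C$ fixing $A$ pointwise. For $F\in\mathsf{age}(X)$ define by recursion: $\mathsf{rk}_X(F)\ge0$ always; $\mathsf{rk}_X(F)\ge\alpha+1$ iff every prime extension $B\in\mathcal F$ of $F$ has a realization $C$ in $X$ with $\mathsf{rk}_X(C)\ge\alpha$; for limit $\alpha$, $\mathsf{rk}_X(F)\ge\alpha$ iff $\mathsf{rk}_X(F)\ge\beta$ for all $\beta<\alpha$. $\mathsf{rk}_X(F)=\sup\{\alpha:\mathsf{rk}_X(F)\ge\alpha\}$, with value $\infty$ (larger than every ordinal) if $\mathsf{rk}_X(F)\ge\alpha$ for every ordinal $\alpha$. *)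

(* Defs.v *)
From HB Require Import structures.
From mathcomp Require Import all_boot.
From mathcomp Require Import finmap.
Set Implicit Arguments. Unset Strict Implicit. Unset Printing Implicit Defensive.
Local Open Scope fset_scope.

Record lang := Lang { sym : countType; arity : sym -> nat }.

Definition lstr (L : lang) (T : Type) := forall s : sym L, ('I_(arity s) -> T) -> Prop.

Section Structures.
Variable L : lang.

Definition embedding (TA TB : Type) (A : lstr L TA) (B : lstr L TB) (f : TA -> TB) :=
  injective f /\ forall (s : sym L) (t : 'I_(arity s) -> TA), A s t <-> B s (f \o t).

Definition isomorphism (TA TB : Type) (A : lstr L TA) (B : lstr L TB) (f : TA -> TB) :=
  bijective f /\ embedding A B f.

Definition fclass := forall T : finType, lstr L T -> Prop.

Definition hereditary (K : fclass) := forall (TA TB : finType) (A : lstr L TA) (B : lstr L TB)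
  (f : TA -> TB), embedding A B f -> K TB B -> K TA A.

Definition iso_closed (K : fclass) := forall (TA TB : finType) (A : lstr L TA) (B : lstr L TB)
  (f : TA -> TB), isomorphism A B f -> K TA A -> K TB B.

Definition induced {T : choiceType} (X : lstr L T) (S : {fset T}) : lstr L S :=
  fun s t => X s (fun i => val (t i)).

(* X is (isomorphic to) the union of a chain of structures from K: there is a
   family of finite subsets of the carrier, linearly ordered by inclusion,
   covering the carrier, each inducing a structure in K. *)
Definition in_sigma (K : fclass) (T : countType) (X : lstr L T) :=
  exists ch : {fset T} -> Prop,
    (forall S1 S2, ch S1 -> ch S2 -> S1 `<=` S2 \/ S2 `<=` S1) /\
    (forall x : T, exists2 S, ch S & x \in S) /\
    (forall S : {fset T}, ch S -> K (fset_sub_type S) (@induced T X S)).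

End Structures.
Arguments induced {L T} X S.

Inductive ord : Type :=
| OZ : ord
| OS : ord -> ord
| OL : (nat -> ord) -> ord.   (* OL f denotes sup_n (f n) *)

Inductive ole : ord -> ord -> Prop :=
| oleZ b : ole OZ b
| oleS a b : olt a b -> ole (OS a) b
| oleL f b : (forall n, ole (f n) b) -> ole (OL f) b
with olt : ord -> ord -> Prop :=
| oltS a b : ole a b -> olt a (OS b)
| oltL a f n : olt a (f n) -> olt a (OL f).

Section Rank.
Variables (L : lang) (K : fclass L) (T : countType) (X : lstr L T).

(* Every prime extension B in K of F has a realization C in X satisfying P. *)
Definition ext_realized (F : {fset T}) (P : {fset T} -> Prop) :=
  forall (TB : finType) (B : lstr L TB) (e : F -> TB),
    @K TB B -> embedding (induced X F) B e ->
    #|[pred y : TB | y \notin codom e]| = 1 ->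
    exists C : {fset T}, F `<=` C /\ P C /\
      exists g : TB -> C, isomorphism B (induced X C) g /\
        forall x : F, val (g (e x)) = val x.

Fixpoint rk_geq (a : ord) (F : {fset T}) : Prop :=
  match a with
  | OZ => True
  | OS b => ext_realized F (rk_geq b)
  | OL f => forall n, rk_geq (f n) F
  end.

(* rk_X(F) = a (an ordinal, i.e. < infinity): a is the supremum of {g | rk_X(F) >= g} *)
Definition rk_is (F : {fset T}) (a : ord) :=
  (forall g, rk_geq g F -> ole g a) /\
  (forall d, (forall g, rk_geq g F -> ole g d) -> ole a d).

End Rank.

(* Main.v *)
Require Import Defs.
From mathcomp Require Import all_boot finmap.
From Stdlib Require Import Classical.

Lemma ole_OS_inv {a b} : ole (OS a) b -> olt a b.
Proof. intro H; inversion H; auto. Qed.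
Lemma ole_OL_inv {f b} : ole (OL f) b -> forall n, ole (f n) b.
Proof. intro H; inversion H; auto. Qed.
Lemma olt_OS_inv {a b} : olt a (OS b) -> ole a b.
Proof. intro H; inversion H; auto. Qed.
Lemma olt_OL_inv {a f} : olt a (OL f) -> exists n, olt a (f n).
Proof. intro H; inversion H; eauto. Qed.
Lemma olt_OZ {a} : ~ olt a OZ.
Proof. intro H; inversion H. Qed.

Scheme ole_ind2 := Induction for ole Sort Prop
with olt_ind2 := Induction for olt Sort Prop.

Lemma ole_trans_gen :
  (forall b c, ole b c -> forall a, ole a b -> ole a c) /\
  (forall b c, olt b c -> forall a, ole a b -> olt a c).
Proof.
split.
- apply (ole_ind2 (fun b c _ => forall a, ole a b -> ole a c)
                 (fun b c _ => forall a, ole a b -> olt a c)).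
  + intros c a; induction a as [|a' _|g IHg]; intros H.
    * constructor.
    * exfalso; exact (olt_OZ (ole_OS_inv H)).
    * constructor; intro m; apply IHg; exact (ole_OL_inv H m).
  + intros b c Hbc IH a; induction a as [|a' _|g IHg]; intros H.
    * constructor.
    * constructor; apply IH; exact (olt_OS_inv (ole_OS_inv H)).
    * constructor; intro m; apply IHg; exact (ole_OL_inv H m).
  + intros f c Hf IH a; induction a as [|a' _|g IHg]; intros H.
    * constructor.
    * destruct (olt_OL_inv (ole_OS_inv H)) as [n Hn]. apply (IH n). constructor; auto.
    * constructor; intro m; apply IHg; exact (ole_OL_inv H m).
  + intros b c Hbc IH a H. constructor; auto.
  + intros b f n Hb IH a H. apply oltL with n; auto.
- apply (olt_ind2 (fun b c _ => forall a, ole a b -> ole a c)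
                 (fun b c _ => forall a, ole a b -> olt a c)).
  + intros c a; induction a as [|a' _|g IHg]; intros H.
    * constructor.
    * exfalso; exact (olt_OZ (ole_OS_inv H)).
    * constructor; intro m; apply IHg; exact (ole_OL_inv H m).
  + intros b c Hbc IH a; induction a as [|a' _|g IHg]; intros H.
    * constructor.
    * constructor; apply IH; exact (olt_OS_inv (ole_OS_inv H)).
    * constructor; intro m; apply IHg; exact (ole_OL_inv H m).
  + intros f c Hf IH a; induction a as [|a' _|g IHg]; intros H.
    * constructor.
    * destruct (olt_OL_inv (ole_OS_inv H)) as [n Hn]. apply (IH n). constructor; auto.
    * constructor; intro m; apply IHg; exact (ole_OL_inv H m).
  + intros b c Hbc IH a H. constructor; auto.
  + intros b f n Hb IH a H. apply oltL with n; auto.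
Qed.

Lemma ole_trans a b c : ole a b -> ole b c -> ole a c.
Proof. intros H1 H2. exact (proj1 ole_trans_gen b c H2 a H1). Qed.
Lemma ole_olt_trans a b c : ole a b -> olt b c -> olt a c.
Proof. intros H1 H2. exact (proj2 ole_trans_gen b c H2 a H1). Qed.
Lemma olt_ole_trans a b c : olt a b -> ole b c -> olt a c.
Proof.
intros H1 H2. assert (H : ole (OS a) c) by (apply ole_trans with b; [constructor|]; auto).
inversion H; auto.
Qed.

Lemma ole_OL a f n : ole a (f n) -> ole a (OL f).
Proof.
induction a as [|a' _|g IHg]; intros H.
- constructor.
- inversion H; subst. constructor. apply oltL with n; auto.
- constructor; intro m; apply IHg; exact (ole_OL_inv H m).
Qed.

Lemma ole_refl a : ole a a.
Proof.
induction a as [|a' IH|g IHg].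
- constructor.
- constructor. constructor. auto.
- constructor; intro m. apply ole_OL with m. auto.
Qed.

Lemma lt_le_aux a : (forall b, ole a b -> ole a (OS b)) /\ (forall b, olt a b -> ole a b).
Proof.
induction a as [|a' IH|g IHg].
- split; intros; constructor.
- split.
  + intros b H. inversion H; subst. constructor. constructor. apply (proj2 IH); auto.
  + intros b H. constructor. apply ole_olt_trans with (OS a'); auto.
    apply (proj1 IH). apply ole_refl.
- split.
  + intros b H. inversion H; subst. constructor; intro m. apply (proj1 (IHg m)); auto.
  + intros b H. constructor; intro m. apply (proj2 (IHg m)).
    apply ole_olt_trans with (OL g); auto. apply ole_OL with m. apply ole_refl.
Qed.

Lemma olt_ole a b : olt a b -> ole a b.
Proof. apply (proj2 (lt_le_aux a)). Qed.

Lemma olt_irrefl a : ~ olt a a.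
Proof.
induction a as [|a' IH|g IHg]; intro H.
- inversion H.
- inversion H; subst. inversion H2; subst. auto.
- inversion H; subst. apply (IHg n). apply ole_olt_trans with (OL g); auto.
  apply ole_OL with n. apply ole_refl.
Qed.

Lemma ole_total a b : ole a b \/ olt b a.
Proof.
revert b; induction a as [|a' IH|g IHg]; intro b.
- left; constructor.
- induction b as [|b' IHb|h IHh].
  + right. constructor. constructor.
  + destruct (IH b') as [H|H].
    * left. constructor. constructor. auto.
    * right. constructor. constructor. auto.
  + destruct (classic (forall m, ole (h m) a')) as [H|H].
    * right. constructor. constructor. auto.
    * apply not_all_ex_not in H. destruct H as [m Hm].
      destruct (IHh m) as [H|H].
      -- left. inversion H; subst. constructor. apply oltL with m; auto.
      -- exfalso. apply Hm. inversion H; subst. auto.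
- destruct (classic (forall n, ole (g n) b)) as [H|H].
  + left. constructor. auto.
  + apply not_all_ex_not in H. destruct H as [n Hn].
    destruct (IHg n b) as [H|H]; [contradiction|].
    right. apply oltL with n; auto.
Qed.

Section Main.
Variables (L : lang) (K : fclass L) (T : countType) (X : lstr L T).

Lemma ext_mono {F : {fset T}} {P Q : {fset T} -> Prop} :
  (forall C, P C -> Q C) -> ext_realized K X F P -> ext_realized K X F Q.
Proof.
intros HPQ H TB B e HB He Hc.
destruct (H TB B e HB He Hc) as [C [H1 [H2 H3]]].
exists C; split; [|split]; auto.
Qed.

Lemma ext_diff {F : {fset T}} {P Q : {fset T} -> Prop} :
  ext_realized K X F Q -> ~ ext_realized K X F P -> exists C, Q C /\ ~ P C.
Proof.
intros HQ HP. apply NNPP; intro Hn. apply HP. refine (ext_mono _ HQ).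
intros C HC. apply NNPP; intro HnP. apply Hn. exists C; auto.
Qed.

Lemma rk_mono :
  forall g g', ole g g' -> forall F, rk_geq K X g' F -> rk_geq K X g F.
Proof.
apply (ole_ind2 (fun g g' _ => forall F, rk_geq K X g' F -> rk_geq K X g F)
                (fun g g' _ => forall F, rk_geq K X g' F -> rk_geq K X (OS g) F)).
- intros; exact I.
- intros a b H IH F Hb. apply IH; auto.
- intros f b H IH F Hb n. apply IH; auto.
- intros a b H IH F Hb. simpl in *. exact (ext_mono IH Hb).
- intros a f n H IH F Hb. apply IH. exact (Hb n).
Qed.

Lemma claim a : forall F b, ~ rk_geq K X a F -> olt b a -> rk_geq K X (OS b) F ->
  exists E, rk_geq K X b E /\ ~ rk_geq K X (OS b) E.
Proof.
induction a as [|a' IH|f IHf]; intros F b Hna Hba Hb.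
- inversion Hba.
- simpl in Hna. destruct (ext_diff Hb Hna) as [C [HC HnC]].
  destruct (classic (rk_geq K X (OS b) C)) as [HS|HS].
  + inversion Hba; subst.
    destruct (ole_total a' b) as [H|H].
    * exfalso. apply HnC. apply rk_mono with b; auto.
    * apply (IH C b); auto.
  + exists C; auto.
- simpl in Hna. apply not_all_ex_not in Hna. destruct Hna as [n Hn].
  destruct (ole_total (f n) b) as [H|H].
  + exfalso. apply Hn. apply rk_mono with b; auto.
    apply rk_mono with (OS b); auto. apply olt_ole. constructor. apply ole_refl.
  + apply (IHf n F b); auto.
Qed.

End Main.

Theorem proposition2p12 (L : lang) (K : fclass L)
  (HKher : hereditary K) (HKiso : iso_closed K)
  (T : countType) (X : lstr L T) (HX : in_sigma K X)
  (F : {fset T}) (a : ord) (HFa : rk_is K X F a)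
  (b : ord) (Hba : olt b a) :
  exists E : {fset T}, rk_is K X E b.
Proof.
destruct HFa as [Hup Hleast].
assert (HnS : ~ rk_geq K X (OS a) F).
{ intro H. apply (olt_irrefl a). specialize (Hup _ H). inversion Hup; auto. }
assert (HbS : rk_geq K X (OS b) F).
{ apply NNPP; intro Hn. apply (olt_irrefl b).
  apply olt_ole_trans with a; auto. apply Hleast. intros g Hg.
  destruct (ole_total g b) as [H|H]; auto.
  exfalso; apply Hn. apply rk_mono with g; auto. constructor; auto. }
destruct (@claim L K T X (OS a) F b HnS) as [E [HE1 HE2]].
{ constructor. apply olt_ole; auto. }
{ auto. }
exists E. split.
- intros g Hg. destruct (ole_total g b) as [H|H]; auto.
  exfalso; apply HE2. apply rk_mono with g; auto. constructor; auto.
- intros d Hd. apply Hd; auto.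
Qed.
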